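(* Let $(P,H,\phi)$ be a host-parasite triple and let $\Psi=\{\psi_1,\dots,\psi_l\}\subseteq\mathcal R(P,H,\phi)$ with $l\ge 1$. Define $\psi_{med}=\psi^{\Psi}_{med}:V(P)\to V(H)$ by letting, for each $v\in V(P)$, $\psi_{med}(v)$ be the element $w\in A(v)$ with $d_H(m(v),w)=zmed(n_1,\dots,n_l)$, where $n_i=d_H(m(v),\psi_i(v))$ for $1\le i\le l$. Then $\psi_{med}\in\mathcal R(P,H,\phi)$.
   Context: A phylogenetic tree $T$ is a finite rooted tree with root $\rho_T$ (indegree $0$, outdegree $2$), in which every vertex other than the root and the leaves has indegree $1$ and outdegree $2$; $V(T)$ is its vertex set, $L(T)$ its leaf set, $V^o(T)=V(T)-L(T)$. $x\succeq_T y$ means $x$ lies on the path from $\rho_T$ to $y$ (i.e. $x$ is an ancestor of $y$ or $x=y$). For $L\subseteq L(T)$ with $|L|\ge 2$, $lca_T(L)$ is the lowest vertex above every element of $L$; if $L=\{x\}$ then $lca_T(L)=x$. $d_T(v,w)$ is the number of edges on the (undirected) path in $T$ between $v$ and $w$. A host-parasite triple $(P,H,\phi)$ consists of two phylogenetic trees $P,H$ and a map $\phi:L(P)\to L(H)$. A reconciliation map is a map $\psi:V(P)\to V(H)$ such that (i) $\psi$ restricted to $L(P)$ equals $\phi$, and (ii) for every $v\in V^o(P)$ and every child $v'$ of $v$, $\psi(v)\succeq_H\psi(v')$; $\mathcal R(P,H,\phi)$ denotes the set of all reconciliation maps. For $v\in V(P)$ let $m(v)=lca_H(\{\phi(x):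 x\in L(P),\ v\succeq_P x\})$ and $A(v)=\{w\in V(H): \rho_H\succeq_H w\succeq_H m(v)\}$ (the vertices on the path from $m(v)$ up to $\rho_H$). Every reconciliation $\psi$ satisfies $\psi(v)\in A(v)$. For a finite multiset $A$ of real numbers, $med(A)$ is its median (the middle element when ordered; for even cardinality, the average of the two middle elements). For a real $r$, $[r]$ is the integer nearest to $r$, and the larger of the two if there are two nearest integers. For a multiset $A=\{n_1,\dots,n_m\}$ of integers, $zmed(n_1,\dots,n_m)=zmed(A)=[med(A)]$. *)

(* Defs.v *)
From mathcomp Require Import all_boot all_order all_algebra.
Set Implicit Arguments. Unset Strict Implicit. Unset Printing Implicit Defensive.
Import Order.TTheory GRing.Theory Num.Theory.

(* A rooted tree on a finite vertex type V is given by its root r and a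
   parent map par with par r = r. *)

Definition children (V : finType) (r : V) (par : V -> V) (v : V) : {set V} :=
  [set w | (w != r) && (par w == v)].

Definition is_leaf (V : finType) (r : V) (par : V -> V) (v : V) : bool :=
  children r par v == set0.

(* phylogenetic tree: every vertex reaches the root, root has outdegree 2,
   every other vertex has outdegree 0 or 2 (indegree 1 is built in). *)
Definition is_phylo_tree (V : finType) (r : V) (par : V -> V) : Prop :=
  [/\ par r = r,
      (forall v, exists n, iter n par v = r),
      #|children r par r| = 2
    & (forall v, v != r -> #|children r par v| = 0 \/ #|children r par v| = 2)].

(* anc par x y  <->  x >=_T y  (x on the path from the root to y) *)
Definition anc (V : finType) (par : V -> V) (x y : V) : Prop :=
  exists n, iter n par y = x.

Definition is_lca (V : finType) (par : V -> V) (L : V -> Prop) (w : V) : Prop :=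
  (forall x, L x -> anc par w x) /\
  (forall u, (forall x, L x -> anc par u x) -> anc par u w).

(* number of edges on the undirected path between v and w: the minimal a + b
   such that the a-th ancestor of v equals the b-th ancestor of w
   (depths are < #|V|, so the search range suffices). *)
Definition tdist (V : finType) (par : V -> V) (v w : V) : nat :=
  \big[minn/(#|V|.*2)]_(a < #|V|.+1)
    \big[minn/(#|V|.*2)]_(b < #|V|.+1 | iter a par v == iter b par w) (a + b)%N.

Local Open Scope ring_scope.

Definition med (s : seq nat) : rat :=
  let t := sort leq s in
  let k := size t in
  if odd k then (nth 0%N t k./2)%:R
  else ((nth 0%N t k./2.-1)%:R + (nth 0%N t k./2)%:R) / 2.

(* nearest integer, the larger one in case of a tie *)
Definition nearest_int (q : rat) : int := Num.floor (q + 1 / 2).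

Definition zmed (s : seq nat) : int := nearest_int (med s).

Definition is_reconciliation (VP VH : finType) (rP : VP) (parP : VP -> VP)
    (rH : VH) (parH : VH -> VH) (phi psi : VP -> VH) : Prop :=
  (forall x, is_leaf rP parP x -> psi x = phi x) /\
  (forall v v', ~~ is_leaf rP parP v -> v' \in children rP parP v ->
     anc parH (psi v) (psi v')).

Definition is_m (VP VH : finType) (rP : VP) (parP : VP -> VP) (parH : VH -> VH)
    (phi : VP -> VH) (v : VP) (m : VH) : Prop :=
  is_lca parH (fun h => exists x, [/\ is_leaf rP parP x, anc parP v x & phi x = h]) m.

Definition med_spec (VP VH : finType) (rP : VP) (parP : VP -> VP)
    (parH : VH -> VH) (phi : VP -> VH) (l : nat) (psis : 'I_l -> VP -> VH)
    (f : VP -> VH) : Prop :=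
  forall v m, is_m rP parP parH phi v m ->
    anc parH (f v) m /\
    (tdist parH m (f v))%:Z = zmed [seq tdist parH m (psis i v) | i <- enum 'I_l].

(* Main.v *)
Require Import Defs.
From mathcomp Require Import all_boot all_order all_algebra.
From mathcomp Require Import zify ring lra.
Import Order.TTheory GRing.Theory Num.Theory.
From Stdlib Require Import Classical_Prop.
Set Implicit Arguments. Unset Strict Implicit. Unset Printing Implicit Defensive.

Lemma ex_min_nat (P : nat -> Prop) n : P n -> exists k, P k /\ forall j, P j -> k <= j.
Proof.
elim: n {-2}n (leqnn n) => [|n IH] m Hm Pm.
  exists m; split => // j _; lia.
case: (classic (exists j, j < m /\ P j)) => [[j [Hj Pj]]|Hno].
  by apply: (IH j) => //; lia.
exists m; split => // j Pj; rewrite leqNgt; apply/negP => Hj; apply: Hno; by exists j.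
Qed.

Lemma bigmin_le (I : finType) (P : pred I) (F : I -> nat) d i0 :
  P i0 -> \big[minn/d]_(i | P i) F i <= F i0.
Proof.
move=> Pi0; rewrite -big_filter.
have : i0 \in [seq i <- index_enum I | P i] by rewrite mem_filter Pi0 mem_index_enum.
elim: [seq i <- _ | _] => //= x s IH; rewrite big_cons inE => /orP [/eqP ->|/IH h].
  exact: geq_minl.
exact: leq_trans (geq_minr _ _) h.
Qed.

Section Tree.
Variables (V : finType) (r : V) (par : V -> V).
Hypothesis Hr : par r = r.
Hypothesis Hreach : forall v, exists n, iter n par v = r.

Lemma Hreach' x : exists n, iter n par x == r.
Proof. by case: (Hreach x) => n Hn; exists n; apply/eqP. Qed.

Definition D x := ex_minn (Hreach' x).

Lemma iter_r n : iter n par r = r.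
Proof. by elim: n => //= n ->. Qed.

Lemma DP x : iter (D x) par x = r.
Proof. by rewrite /D; case: ex_minnP => m /eqP. Qed.

Lemma D_min x n : iter n par x = r -> D x <= n.
Proof. by rewrite /D; case: ex_minnP => m _ Hm /eqP Hn; apply: Hm. Qed.

Lemma iter_ge_D x n : D x <= n -> iter n par x = r.
Proof. by move=> H; rewrite -(subnK H) iterD DP iter_r. Qed.

Lemma iter_mul z n k : iter n par z = z -> iter (k * n) par z = z.
Proof. by move=> H; elim: k => //= k IH; rewrite mulSn iterD IH H. Qed.

Lemma cycle_r z n : 0 < n -> iter n par z = z -> z = r.
Proof.
move=> n0 H; have := iter_mul (D z) H.
by rewrite iter_ge_D // leq_pmulr.
Qed.

Lemma iter_inj x i j : i <= D x -> j <= D x -> iter i par x = iter j par x -> i = j.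
Proof.
wlog: i j / i <= j => [W|ij] hi hj E.
  case: (leqP i j) => h; first by apply: W.
  exact: (esym (W j i (ltnW h) hj hi (esym E))).
have [->//|lij] : i = j \/ i < j by lia.
have : iter (j - i) par (iter i par x) = iter i par x by rewrite -iterD subnK.
move/(cycle_r _); rewrite subn_gt0 => /(_ lij) /D_min; lia.
Qed.

Lemma iter_minn x a : iter a par x = iter (minn a (D x)) par x.
Proof.
rewrite /minn; case: ltnP => h //.
by rewrite DP iter_ge_D.
Qed.

Lemma iter_eq_minn x a b : iter a par x = iter b par x -> minn a (D x) = minn b (D x).
Proof.
by rewrite (iter_minn _ a) (iter_minn _ b) => /iter_inj; apply; apply: geq_minr.
Qed.

Lemma anc_iter u x : anc par u x -> exists2 k, k <= D x & u = iter k par x.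
Proof.
case=> n <-; exists (minn n (D x)); first exact: geq_minr.
exact: iter_minn.
Qed.

Lemma D_lt x : D x < #|V|.
Proof.
have inj : injective (fun i : 'I_(D x).+1 => iter i par x).
  move=> i j /iter_inj H; apply: val_inj; apply: H; rewrite -ltnS; exact: ltn_ord.
by have := leq_card _ inj; rewrite card_ord.
Qed.

Lemma tdist_iter x k : k <= D x -> tdist par x (iter k par x) = k.
Proof.
move=> hk; have hD := D_lt x.
apply/eqP; rewrite eqn_leq; apply/andP; split.
  have hk' : k < #|V|.+1 by lia.
  rewrite /tdist. 
  apply: leq_trans (@bigmin_le _ (fun _ => true) _ _ (Ordinal hk') isT) _ => /=.
  apply: leq_trans (@bigmin_le _ (fun b : 'I_#|V|.+1 => iter k par x == iter b par (iter k par x)) _ _ ord0 _) _; by rewrite /= ?eqxx ?addn0.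
apply: (big_ind (fun m => k <= m)); first by lia.
  by move=> a b ha hb; rewrite leq_min ha hb.
move=> a _; apply: (big_ind (fun m => k <= m)); first by lia.
  by move=> c e ha hb; rewrite leq_min ha hb.
move=> b /eqP; rewrite -iterD => /iter_eq_minn; lia.
Qed.

Lemma anc_refl x : anc par x x. Proof. by exists 0. Qed.
Lemma anc_trans x y z : anc par x y -> anc par y z -> anc par x z.
Proof. by case=> n <- [m <-]; exists (n + m); rewrite iterD. Qed.
Lemma anc_root x : anc par r x. Proof. by exists (D x); apply: DP. Qed.
Lemma anc_par x : anc par (par x) x. Proof. by exists 1. Qed.
Lemma anc_antisym x y : anc par x y -> anc par y x -> x = y.
Proof.
case=> a Ha [b Hb].
have E : iter (a + b) par x = x by rewrite iterD Hb.
case: (posnP (a + b)) => h.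
  have a0 : a = 0 by lia.
  by rewrite -Ha a0.
have xr := cycle_r h E; move: Hb; rewrite xr iter_r => <-.
done.
Qed.

Lemma lca_exists (L : V -> Prop) h0 : L h0 -> exists m, is_lca par L m.
Proof.
move=> Lh0.
have PD : (fun k => forall h, L h -> anc par (iter k par h0) h) (D h0).
  by move=> h _; rewrite DP; apply: anc_root.
have [k [Pk Hk]] := @ex_min_nat (fun k => forall h, L h -> anc par (iter k par h0) h) _ PD.
exists (iter k par h0); split => // u Hu.
case: (Hu h0 Lh0) => j Hj.
have Pj : forall h, L h -> anc par (iter j par h0) h by rewrite Hj.
have kj := Hk j Pj.
by exists (j - k); rewrite -iterD subnK.
Qed.

Lemma lca_unique (L : V -> Prop) m1 m2 : is_lca par L m1 -> is_lca par L m2 -> m1 = m2.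
Proof.
case=> H1 H1' [H2 H2']; apply: anc_antisym; [apply: H2' | apply: H1'] => //.
Qed.

Lemma D_par c : c != r -> D c = (D (par c)).+1.
Proof.
move=> cr; apply/eqP; rewrite eqn_leq; apply/andP; split.
  by apply: D_min; rewrite iterSr DP.
have : 0 < D c.
  rewrite lt0n; apply/negP => /eqP h; have := DP c; rewrite h /= => E.
  by rewrite E eqxx in cr.
case E: (D c) => [|n] //= _.
by apply: D_min; rewrite -iterSr -E DP.
Qed.

End Tree.
Lemma sorted_nth_le (u : seq nat) k y : sorted leq u -> k < size u ->
  (nth 0 u k <= y) = (k < count (fun x => x <= y) u).
Proof.
elim: u k => [|x u IH] k //= Hs Hk.
have Hsu : sorted leq u := path_sorted Hs.
have Hall : all (leq x) u := order_path_min leq_trans Hs.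
have Hc : ~~ (x <= y) -> count (fun x => x <= y) u = 0.
  move=> nxy; apply/eqP; rewrite -leqn0 leqNgt -has_count; apply/hasPn => z zu.
  move/allP: Hall => /(_ z zu) xz; apply/negP => zy; move/negP: nxy; apply; exact: leq_trans xz zy.
case: k Hk => [|k] Hk /=.
  by case: (boolP (x <= y)) => h //=; rewrite Hc.
rewrite IH //; case: (boolP (x <= y)) => h //=; rewrite Hc //.
Qed.

Lemma nth_sort_mono (s t : seq nat) k : size s = size t ->
  (forall y, count (fun x => x <= y) t <= count (fun x => x <= y) s) ->
  nth 0 (sort leq s) k <= nth 0 (sort leq t) k.
Proof.
move=> Hsz Hc.
case: (ltnP k (size s)) => hk; last first.
  by rewrite nth_default // size_sort.
have hkt : k < size (sort leq t) by rewrite size_sort -Hsz.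
have Ss := sort_sorted leq_total s; have St := sort_sorted leq_total t.
rewrite sorted_nth_le ?size_sort //.
have := leqnn (nth 0 (sort leq t) k).
rewrite {1}sorted_nth_le //.
move=> h; apply: leq_trans h _.
have ps : perm_eq (sort leq s) s by rewrite perm_sort perm_refl.
have pt : perm_eq (sort leq t) t by rewrite perm_sort perm_refl.
rewrite (permP ps) (permP pt); exact: Hc.
Qed.

Lemma med_mono (s t : seq nat) : size s = size t ->
  (forall y, count (fun x => x <= y) t <= count (fun x => x <= y) s) ->
  (med s <= med t)%R.
Proof.
move=> Hsz Hc; rewrite /med !size_sort Hsz.
have M := fun k => nth_sort_mono k Hsz Hc.
case: ifP => _; first by rewrite ler_nat.
have h1 := M (size t)./2.-1; have h2 := M (size t)./2.
rewrite -!(ler_nat rat) in h1 h2.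
lra.
Qed.

Lemma med_shift (s : seq nat) d : 0 < size s ->
  med [seq x + d | x <- s] = (med s + d%:R)%R.
Proof.
move=> Hs; rewrite /med.
have -> : sort leq [seq x + d | x <- s] = [seq x + d | x <- sort leq s].
  apply: homo_sort_map.
  - by move=> a b /=; rewrite !leq_add2r => /anti_leq.
  - by move=> a b c /=; rewrite !leq_add2r; apply: leq_trans.
  - exact: leq_total.
  - by move=> a b; rewrite leq_add2r.
rewrite size_map size_sort.
have h1 : (size s)./2 < size (sort leq s) by rewrite size_sort ltn_half_double -addnn; lia.
have h2 : (size s)./2.-1 < size (sort leq s) by move: h1; lia.
rewrite !(nth_map 0) // !natrD.
case: ifP => _ //.
set a := ((nth 0 (sort leq s) (size s)./2)%:R : rat)%R.
set b := ((nth 0 (sort leq s) (size s)./2.-1)%:R : rat)%R.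
lra.
Qed.

Lemma zmed_mono (s t : seq nat) : size s = size t ->
  (forall y, count (fun x => x <= y) t <= count (fun x => x <= y) s) ->
  (zmed s <= zmed t)%R.
Proof.
move=> Hsz Hc; rewrite /zmed /nearest_int; apply: le_floor.
by rewrite lerD2r; apply: med_mono.
Qed.

Lemma zmed_shift (s : seq nat) d : 0 < size s ->
  zmed [seq x + d | x <- s] = (zmed s + (d%:Z)%R)%R.
Proof.
move=> Hs; rewrite /zmed /nearest_int med_shift //.
rewrite -addrA [(d%:R + _)%R]addrC addrA floorDrz ?natr_int //.
congr (_ + _)%R; exact: (intrKfloor (d%:Z)%R).
Qed.

Lemma zmed_bounds (s : seq nat) B : all (fun x => x <= B) s ->
  (0 <= zmed s)%R /\ (zmed s <= (B%:Z)%R)%R.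
Proof.
move=> Hall.
have Hn : forall i, nth 0 (sort leq s) i <= B.
  move=> i; case: (ltnP i (size (sort leq s))) => hi; last by rewrite nth_default.
  have : nth 0 (sort leq s) i \in s by rewrite -(mem_sort leq) mem_nth.
  by move/(allP Hall).
have Hm : (0 <= med s)%R /\ (med s <= B%:R)%R.
  rewrite /med; case: ifP => _.
    by rewrite ler_nat Hn.
  have h1 := Hn (size (sort leq s))./2.-1; have h2 := Hn (size (sort leq s))./2.
  rewrite -(ler_nat rat) in h1; rewrite -(ler_nat rat) in h2.
  have g1 : (0 <= ((nth 0 (sort leq s) (size (sort leq s))./2.-1)%:R : rat))%R by [].
  have g2 : (0 <= ((nth 0 (sort leq s) (size (sort leq s))./2)%:R : rat))%R by [].
  move: h1 h2 g1 g2.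
  set a := ((nth 0 (sort leq s) (size (sort leq s))./2.-1)%:R : rat)%R.
  set b := ((nth 0 (sort leq s) (size (sort leq s))./2)%:R : rat)%R.
  set c := (B%:R : rat)%R.
  move=> h1 h2 g1 g2; split; lra.
case: Hm => m0 mB; rewrite /zmed /nearest_int; split.
  by rewrite floor_ge0; lra.
rewrite -ltzD1 floor_lt_int.
have -> : (((B%:Z + 1)%:~R : rat) = B%:R + 1)%R by rewrite intrD.
lra.
Qed.
Lemma arith1 a b c : a - b <= 0 -> c = b.+1 -> c < a -> False.
Proof. lia. Qed.
Lemma arith2 a b c n : a - b <= n.+1 -> c = b.+1 -> c < a -> a - c <= n.
Proof. lia. Qed.

Section Main.
Variables (VP VH : finType) (rP : VP) (parP : VP -> VP) (rH : VH) (parH : VH -> VH) (phi : VP -> VH).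
Hypothesis HrP : parP rP = rP.
Hypothesis HreachP : forall v, exists n, iter n parP v = rP.
Hypothesis Hc2 : #|children rP parP rP| = 2.
Hypothesis HrH : parH rH = rH.
Hypothesis HreachH : forall v, exists n, iter n parH v = rH.

Lemma rP_not_leaf : ~~ is_leaf rP parP rP.
Proof. by rewrite /is_leaf; apply/negP => /eqP E; have := Hc2; rewrite E cards0. Qed.

Lemma leaf_anc x y : is_leaf rP parP x -> anc parP x y -> y = x.
Proof.
move=> lx [[|n]] //= E.
case: (eqVneq (iter n parP y) rP) => hr.
  by move: lx rP_not_leaf; rewrite -E hr HrP => ->.
have : iter n parP y \in children rP parP x by rewrite inE hr /= E.
by move: lx; rewrite /is_leaf => /eqP ->; rewrite inE.
Qed.

Lemma leaf_below v : exists x, is_leaf rP parP x /\ anc parP v x.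
Proof.
have Hgen : forall n w, #|VP| - D HreachP w <= n -> exists x, is_leaf rP parP x /\ anc parP w x.
  elim=> [|n IH] w Hn; (case: (boolP (is_leaf rP parP w)) => lw; first by exists w; split => //; apply: anc_refl);
    move: lw; rewrite /is_leaf => /set0Pn [c]; rewrite inE => /andP [cr /eqP pc];
    have Dc := D_par HreachP cr; have Dlt := D_lt HrP HreachP c; rewrite pc in Dc.
    by case: (arith1 Hn Dc Dlt).
  have [x [lx ax]] := IH c (arith2 Hn Dc Dlt).
  by exists x; split => //; apply: anc_trans ax; rewrite -pc; apply: anc_par.
exact: (Hgen _ v (leqnn _)).
Qed.

Lemma rec_anc psi : is_reconciliation rP parP rH parH phi psi ->
  forall v w, anc parP v w -> anc parH (psi v) (psi w).
Proof.
move=> [_ Hr] v w [n]; elim: n w => [|n IH] w E.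
  by rewrite -E; apply: anc_refl.
rewrite iterSr in E; have := IH _ E => /anc_trans; apply.
case: (eqVneq w rP) => wr.
  by rewrite wr HrP; apply: anc_refl.
have cw : w \in children rP parP (parP w) by rewrite /children inE wr eqxx.
apply: (Hr _ _ _ cw); rewrite /is_leaf; apply/set0Pn; by exists w.
Qed.

Lemma rec_m psi : is_reconciliation rP parP rH parH phi psi ->
  forall v m, is_m rP parP parH phi v m -> anc parH (psi v) m.
Proof.
move=> Hpsi v m [_ H2]; apply: H2 => h [x [lx avx <-]].
have [Hl _] := Hpsi; rewrite -(Hl x lx); exact: rec_anc Hpsi _ _ avx.
Qed.

Lemma ex_m v : exists m, is_m rP parP parH phi v m.
Proof.
have [x [lx avx]] := leaf_below v.
apply: (@lca_exists _ rH parH HreachH _ (phi x)).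
by exists x; split.
Qed.

End Main.

From Stdlib Require Import IndefiniteDescription.

Theorem mainTheorem2 (VP VH : finType) (rP : VP) (parP : VP -> VP)
  (rH : VH) (parH : VH -> VH) (phi : VP -> VH) (l : nat)
  (psis : 'I_l -> VP -> VH) :
  is_phylo_tree rP parP -> is_phylo_tree rH parH ->
  (forall x, is_leaf rP parP x -> is_leaf rH parH (phi x)) ->
  (0 < l)%N -> injective psis ->
  (forall i, is_reconciliation rP parP rH parH phi (psis i)) ->
  (exists f, med_spec rP parP parH phi psis f) /\
  (forall f, med_spec rP parP parH phi psis f ->
     is_reconciliation rP parP rH parH phi f).
Proof.
move=> [HrP HreachP Hc2 _] [HrH HreachH _ _] _ l0 _ Hrec.
have [mf Hmf] : exists mf : VP -> VH, forall v, is_m rP parP parH phi v (mf v).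
  exists (fun v => proj1_sig (constructive_indefinite_description _ (ex_m phi HrP HreachP HreachH v))).
  move=> v; exact: proj2_sig.
pose sq v m := [seq tdist parH m (psis i v) | i <- enum 'I_l].
have Hs_le : forall v m, is_m rP parP parH phi v m -> all (fun x => x <= D HreachH m) (sq v m).
  move=> v m Hm; apply/allP => y /mapP [i _ ->].
  have [k hk ->] := anc_iter HrH HreachH (rec_m HrP (Hrec i) Hm).
  by rewrite tdist_iter.
have Hsz : forall v m, size (sq v m) = l by move=> v m; rewrite size_map size_enum_ord.
split.
  exists (fun v => iter `|zmed (sq v (mf v))| parH (mf v)) => v m Hm.
  have E := lca_unique HrH HreachH Hm (Hmf v); rewrite -E.
  have [z0 zB] := zmed_bounds (Hs_le v m Hm).
  split; first by exists `|zmed (sq v m)|.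
  rewrite tdist_iter ?gez0_abs //.
  by rewrite -lez_nat gez0_abs.
move=> f Hf; split.
  move=> x lx.
  have Hm : is_m rP parP parH phi x (phi x).
    split.
      move=> h [y [ly axy <-]]; rewrite (leaf_anc HrP Hc2 lx axy); exact: anc_refl.
    move=> u Hu; apply: Hu; exists x; split => //; exact: anc_refl.
  have [Ha Ht] := Hf x (phi x) Hm.
  have [k hk Ek] := anc_iter HrH HreachH Ha.
  have H0 : all (fun x => x <= 0) (sq x (phi x)).
    apply/allP => y /mapP [i _ ->].
    have [Hl _] := Hrec i; rewrite (Hl x lx).
    by rewrite -[X in tdist _ _ X]/(iter 0 parH (phi x)) tdist_iter.
  have [z0 zB] := zmed_bounds H0.
  have Z : zmed (sq x (phi x)) = 0%R by apply/eqP; rewrite eq_le z0 zB.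
  rewrite Z Ek tdist_iter // in Ht.
  by rewrite Ek; case: Ht => ->.
move=> v v' nl; rewrite /children inE => /andP [v'r /eqP pv'].
set m := mf v; set m' := mf v'.
have avv' : anc parP v v' by rewrite -pv'; apply: anc_par.
have amm' : anc parH m m'.
  case: (Hmf v') => _; apply => h [y [ly ay <-]].
  case: (Hmf v) => H1 _; apply: H1; exists y; split => //; exact: anc_trans avv' ay.
have [d hd Ed] := anc_iter HrH HreachH amm'.
have [Ha Ht] := Hf v m (Hmf v).
have [z0 hz0 Ez0] := anc_iter HrH HreachH Ha.
rewrite Ez0 tdist_iter // in Ht.
have [Ha' Ht'] := Hf v' m' (Hmf v').
have [z1 hz1 Ez1] := anc_iter HrH HreachH Ha'.
rewrite Ez1 tdist_iter // in Ht'.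
have key : (zmed (sq v' m') <= zmed [seq x + d | x <- sq v m])%R.
  apply: zmed_mono; first by rewrite !size_map.
  move=> y; rewrite /sq -map_comp !count_map; apply: sub_count => i /=.
  have [n hn En] := anc_iter HrH HreachH (rec_m HrP (Hrec i) (Hmf v)).
  have [p hp Ep] := anc_iter HrH HreachH (rec_m HrP (Hrec i) (Hmf v')).
  rewrite -/m -/m' in En Ep.
  rewrite En Ep !tdist_iter //.
  have [c Ec] := rec_anc HrP (Hrec i) avv'.
  rewrite En Ep Ed -!iterD in Ec.
  have := iter_eq_minn HrH HreachH Ec.
  move=> hm hy.
  have hp' : p <= D HreachH m' by [].
  suff h : p <= n + d by apply: leq_trans h hy.
  move: hm hp'; generalize (D HreachH m'); clear; lia.
rewrite zmed_shift ?Hsz // -Ht -Ht' -PoszD lez_nat in key.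
exists (z0 + d - z1).
by rewrite Ez1 -iterD subnK // iterD -Ed -Ez0.
Qed.
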